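(* Let $\rho\in(0,\infty)$ and $\bar v\in(0,1)$. There exist constants $c_1,c_2>0$ (depending only on $\bar v$, $\rho$ and $q$) such that for all $y\in\mathbb Z^2$ and $l\in\mathbb Z_+$, $\mathbb P^\rho[h(y)>l]\le c_1e^{-c_2l}$, where $h(y)=\inf\{l\in\mathbb Z_+:\ \omega(W^\times_y\cap W^\times_{y+(l,l)})=0\}$.
   Context: Fix $q\in(0,1)$. $W$ is the set of two-sided paths $w:\mathbb Z\to\mathbb Z$ with $|w(n+1)-w(n)|\le1$; $P_x$ is the law on $W$ of a two-sided lazy simple random walk (steps $-1,0,1$ with probabilities $\frac{1-q}2,q,\frac{1-q}2$) with $w(0)=x$. Under $\mathbb P^\rho$, $\omega$ is a Poisson point process on $W$ with intensity $\rho\sum_xP_x$. Cones: $\angle(x,n)=(x,n)+\{(x',n')\in\mathbb Z_+^2: x'\ge\bar vn'\}$ and $\angle^{\mathrm{rev}}(x,n)=(x,n)+\{(x',n')\in\mathbb Z_-^2: x'<\bar vn'\}$ ($\mathbb Z_\pm$ include $0$). The trace of $w$ is $\{(w(n),n):n\in\mathbb Z\}$; $W^\times_y$ is the set of $w\in W$ whose trace intersects both $\angle(y)$ and $\angle^{\mathrm{rev}}(y)$. *)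

(* Defs.v *)
From HB Require Import structures.
From mathcomp Require Import all_boot all_order all_algebra.
From mathcomp Require Import all_classical all_reals all_analysis measurable_realfun.
Set Implicit Arguments. Unset Strict Implicit. Unset Printing Implicit Defensive.
Import Order.TTheory GRing.Theory Num.Theory.
Local Open Scope classical_set_scope.
Local Open Scope ring_scope.

(* int made a pointedType (point 0) so that the cylinder sigma-algebra applies *)
HB.instance Definition _ := isPointed.Build int 0.

Definition cylinders : set (set (int -> int)) :=
  fun A => exists (n a : int), A = [set w | w n = a].

Definition Path := g_sigma_algebraType cylinders.

Definition Wpaths : set Path := [set w | forall n : int, `|w (n + 1) - w n| <= 1].

Definition lazy_step {R : realType} (q : R) (z : int) : R :=
  if z == 0 then q else if (z == 1) || (z == -1) then (1 - q) / 2 else 0.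

(* P_x : law of the two-sided lazy SRW with w(0) = x, characterised by its
   finite-dimensional distributions on every window [m, m+N] containing 0. *)
Definition is_lazy_walk_law {R : realType} (q : R) (x : int)
    (Px : probability Path R) : Prop :=
  forall (m : int) (N : nat) (a : int -> int),
    m <= 0 -> 0 <= m + N%:Z ->
    Px [set w : Path | forall k : int, m <= k -> k <= m + N%:Z -> w k = a k]
    = ((if a 0 == x then 1 else 0) *
        \prod_(i < N) lazy_step q (a (m + i%:Z + 1) - a (m + i%:Z)))%:E.

Definition intensity {R : realType} (rho : R) (P : int -> probability Path R)
    (A : set Path) : \bar R :=
  (rho%:E * \esum_(x in [set: int]) P x A)%E.

Definition is_PPP {R : realType} {d : measure_display} {Omega : measurableType d}
    (PP : probability Omega R) (nu : set Path -> \bar R)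
    (omega : Omega -> {measure set Path -> \bar R}) : Prop :=
  (forall A : set Path, measurable A -> measurable_fun [set: Omega] ((fun o => omega o A) : Omega -> \bar R))
  /\
  (forall (A : set Path) (m : R), measurable A -> nu A = m%:E ->
     forall k : nat,
       PP [set o | omega o A = k%:R%:E] = (expR (- m) * m ^+ k / k`!%:R)%:E)
  /\ (forall A : set Path, measurable A -> nu A = +oo%E ->
       PP [set o | omega o A = +oo%E] = 1%E)
  /\
  (forall (n : nat) (A : 'I_n -> set Path) (k : 'I_n -> nat),
     (forall i, measurable (A i)) ->
     (forall i j, i != j -> A i `&` A j = set0) ->
     PP (\bigcap_(i in [set: 'I_n]) [set o | omega o (A i) = (k i)%:R%:E])
     = (\prod_(i < n) PP [set o | omega o (A i) = (k i)%:R%:E])%E).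

Definition cone {R : realType} (vbar : R) (y : int * int) : set (int * int) :=
  [set p | 0 <= p.1 - y.1 /\ 0 <= p.2 - y.2 /\
           vbar * (p.2 - y.2)%:~R <= (p.1 - y.1)%:~R].

Definition cone_rev {R : realType} (vbar : R) (y : int * int) : set (int * int) :=
  [set p | p.1 - y.1 <= 0 /\ p.2 - y.2 <= 0 /\
           (p.1 - y.1)%:~R < vbar * (p.2 - y.2)%:~R].

Definition trace (w : Path) : set (int * int) := [set (w n, n) | n in [set: int]].

Definition Wcross {R : realType} (vbar : R) (y : int * int) : set Path :=
  [set w | Wpaths w /\ trace w `&` cone vbar y !=set0
                    /\ trace w `&` cone_rev vbar y !=set0].

(* the event {h(y) > l}, with
   h(y) = inf { l in Z_+ : omega(W^x_y \cap W^x_{y+(l,l)}) = 0 }  (inf set0 = oo) *)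
Definition h_gt {R : realType} {d : measure_display} {Omega : measurableType d}
    (vbar : R) (omega : Omega -> {measure set Path -> \bar R})
    (y : int * int) (l : nat) : set Omega :=
  [set o | forall l' : nat, (l' <= l)%N ->
     omega o (Wcross vbar y `&` Wcross vbar (y.1 + l'%:Z, y.2 + l'%:Z)) != 0%E].

(* Main.v *)
Require Import Defs.
From HB Require Import structures.
From mathcomp Require Import all_boot all_order all_algebra.
From mathcomp Require Import all_classical all_reals all_analysis measurable_realfun.
Import Order.TTheory GRing.Theory Num.Theory.
Local Open Scope classical_set_scope.
Local Open Scope ring_scope.
From mathcomp Require Import zify ring lra.
From mathcomp Require finmap.

Local Open Scope ring_scope.
Local Close Scope ereal_scope.
Lemma cint : countable [set: int]. Proof. exact: countableP. Qed.

Lemma mcyl (n a : int) : measurable [set w : Path | w n = a].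
Proof. by apply: sub_sigma_algebra; exists n, a. Qed.

Lemma mcoord (n : int) (P : int -> Prop) : measurable [set w : Path | P (w n)].
Proof.
have -> : [set w : Path | P (w n)] =
  \bigcup_(a : int) ([set w : Path | w n = a] `&` [set _ | P a]).
  apply/seteqP; split => [w Pw|w [a _ [/= <- Pa]]] //.
  by exists (w n) => //.
apply: countable_bigcupT_measurable; first exact: cint.
move=> a; case: (pselect (P a)) => Pa.
  by apply: measurableI; [exact: mcyl| rewrite (_ : [set _ | P a] = setT) //; apply/seteqP; split].
by rewrite (_ : [set _ | P a] = set0) ?setI0 //; apply/seteqP; split.
Qed.

Lemma mcoord2 (n m : int) (P : int -> int -> Prop) :
  measurable [set w : Path | P (w n) (w m)].
Proof.
have -> : [set w : Path | P (w n) (w m)] =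
  \bigcup_(a : int) ([set w : Path | w n = a] `&` [set w : Path | P a (w m)]).
  apply/seteqP; split => [w Pw|w [a _ [/= <- Pa]]] //.
  by exists (w n) => //.
apply: countable_bigcupT_measurable; first exact: cint.
by move=> a; apply: measurableI; [exact: mcyl| exact: mcoord].
Qed.

Lemma mbigcapZ (F : int -> set Path) : (forall n, measurable (F n)) ->
  measurable (\bigcap_(n : int) F n).
Proof.
move=> mF; rewrite -[X in measurable X]setCK setC_bigcap.
apply: measurableC; apply: countable_bigcupT_measurable; first exact: cint.
by move=> n; apply: measurableC.
Qed.

Lemma mWpaths : measurable Wpaths.
Proof.
have -> : Wpaths = \bigcap_(n : int) [set w : Path | `|w (n + 1) - w n| <= 1].
  by apply/seteqP; split => [w Hw n _|w Hw n] //=; apply: Hw.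
apply: mbigcapZ => n; exact: (mcoord2 (n + 1) n (fun a b : int => `|a - b| <= 1)).
Qed.

Lemma mtrace (C : set (int * int)) :
  measurable [set w : Path | trace w `&` C !=set0].
Proof.
have -> : [set w : Path | trace w `&` C !=set0] =
  \bigcup_(n : int) [set w : Path | C (w n, n)].
  apply/seteqP; split => [w [p [[n _ <-] Cp]]|w [n _ Cn]] /=.
    by exists n.
  by exists (w n, n); split => //; exists n.
apply: countable_bigcupT_measurable; first exact: cint.
by move=> n; exact: (mcoord n (fun a => C (a, n))).
Qed.

Lemma mWcross (R : realType) (vbar : R) y : measurable (Wcross vbar y).
Proof.
rewrite /Wcross.
have -> : [set w : Path | Wpaths w /\ trace w `&` cone vbar y !=set0
                    /\ trace w `&` cone_rev vbar y !=set0] =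
  Wpaths `&` ([set w : Path | trace w `&` cone vbar y !=set0] `&`
     [set w : Path | trace w `&` cone_rev vbar y !=set0]) by [].
by apply: measurableI; [exact: mWpaths|apply: measurableI; exact: mtrace].
Qed.
Lemma fsum_fin (R : realType) (T : finType) (P : pred T) (F : T -> \bar R) :
  \sum_(s \in [set s | P s]) F s = (\sum_(s | P s) F s)%E.
Proof.
rewrite (fsbigE (enum P)) ?enum_uniq //.
- rewrite big_enum_cond /=; apply: eq_bigl => s.
  apply/idP/idP => [/andP[]//|Ps]; apply/andP; split => //.
  by rewrite in_setE.
- by move=> s /=; rewrite mem_enum.
- by move=> i /= Pi /negP[]; rewrite mem_enum.
Qed.


Local Open Scope ring_scope.
Local Close Scope ereal_scope.
Definition stp (t : 'I_3) : int := (t : nat)%:Z - 1.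
Definition pos {N} (s : {ffun 'I_N -> 'I_3}) (i : nat) : int :=
  \sum_(j < N | (j < i)%N) stp (s j).
Definition apath (m x : int) {N} (s : {ffun 'I_N -> 'I_3}) (k : int) : int :=
  x - pos s `|- m|%N + pos s `|k - m|%N.
Definition cyl (m : int) (N : nat) (a : int -> int) : set Path :=
  [set w : Path | forall k : int, m <= k -> k <= m + N%:Z -> w k = a k].

Lemma posS N (s : {ffun 'I_N -> 'I_3}) (i : 'I_N) :
  pos s i.+1 = pos s i + stp (s i).
Proof.
rewrite /pos (bigD1 i) //= addrC; congr (_ + _).
apply: eq_bigl => j; rewrite ltnS; apply/andP/idP => [[]|ji].
  by rewrite leq_eqVlt => /orP[/eqP/val_inj->|]//; rewrite eqxx.
by split; [exact: ltnW|rewrite neq_ltn ji].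
Qed.

Lemma astep m x N (s : {ffun 'I_N -> 'I_3}) (i : 'I_N) :
  apath m x s (m + (i : nat)%:Z + 1) - apath m x s (m + (i : nat)%:Z) = stp (s i).
Proof.
rewrite /apath.
have -> : m + (i : nat)%:Z + 1 - m = (i.+1)%:Z by lia.
have -> : m + (i : nat)%:Z - m = (i : nat)%:Z by lia.
rewrite !absz_nat posS; lia.
Qed.

Lemma apath0 m x N (s : {ffun 'I_N -> 'I_3}) : apath m x s 0 = x.
Proof. by rewrite /apath sub0r subrK. Qed.

Lemma stp_inj : injective stp.
Proof. by move=> a b; rewrite /stp => /addIr /eqP; rewrite eqz_nat => /eqP /val_inj. Qed.

Lemma mcyl_win m N a : measurable (cyl m N a).
Proof.
have -> : cyl m N a = \bigcap_(k : int)
   [set w : Path | m <= k -> k <= m + N%:Z -> w k = a k].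
  by apply/seteqP; split => [w Hw k _|w Hw k] //=; apply: Hw.
apply: mbigcapZ => k.
exact: (mcoord k (fun v => m <= k -> k <= m + N%:Z -> v = a k)).
Qed.

Lemma cyl_disj m x N (s s' : {ffun 'I_N -> 'I_3}) w :
  cyl m N (apath m x s) w -> cyl m N (apath m x s') w -> s = s'.
Proof.
move=> H1 H2; apply/ffunP => i; apply: stp_inj.
have hi := ltn_ord i.
have e k : m <= k -> k <= m + N%:Z -> apath m x s k = apath m x s' k.
  by move=> ??; rewrite -H1 // -H2.
rewrite -(astep m x _ s i) -(astep m x _ s' i) !e //; lia.
Qed.


Local Open Scope ring_scope.
Local Close Scope ereal_scope.
Definition wt {R : realType} (q : R) (t : 'I_3) : R := lazy_step q (stp t).

Lemma cyl_prob (R : realType) (q : R) x (Px : probability Path R) m N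
  (s : {ffun 'I_N -> 'I_3}) :
  is_lazy_walk_law q x Px -> m <= 0 -> 0 <= m + N%:Z ->
  Px (cyl m N (apath m x s)) = (\prod_(i < N) wt q (s i))%:E.
Proof.
move=> law hm hN; rewrite /cyl law // apath0 eqxx mul1r; congr (_%:E).
by apply: eq_bigr => i _; rewrite astep.
Qed.

Lemma wt_sum (R : realType) (q : R) : \sum_(t < 3) wt q t = 1.
Proof.
rewrite !big_ord_recr big_ord0 /= /wt /stp /lazy_step /=.
rewrite add0r; lra.
Qed.

Lemma window_bound (R : realType) (q : R) x (Px : probability Path R) m N
  (G : set Path) (Qb : pred {ffun 'I_N -> 'I_3}) :
  is_lazy_walk_law q x Px -> m <= 0 -> 0 <= m + N%:Z -> measurable G ->
  (forall s w, cyl m N (apath m x s) w -> G w -> Qb s) ->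
  (Px G <= (\sum_(s | Qb s) \prod_(i < N) wt q (s i))%:E)%E.
Proof.
move=> law hm hN mG HQ.
pose C := fun s : {ffun 'I_N -> 'I_3} => cyl m N (apath m x s).
have mC (s : {ffun 'I_N -> 'I_3}) : measurable (C s) by exact: mcyl_win.
have triv D : trivIset D C.
  by move=> s s' _ _ [w [h1 h2]]; exact: cyl_disj h1 h2.
pose U := \bigcup_(s in [set s | Qb s]) C s.
pose All := \bigcup_(s in [set: {ffun 'I_N -> 'I_3}]) C s.
have mU : measurable U by apply: fin_bigcup_measurable => //; exact: finite_finset.
have mA : measurable All by apply: fin_bigcup_measurable => //; exact: finite_finset.
have PU : Px U = (\sum_(s | Qb s) \prod_(i < N) wt q (s i))%:E.
  rewrite measure_fin_bigcup //; last exact: finite_finset.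
  rewrite fsum_fin -sumEFin; apply: eq_bigr => s _; exact: cyl_prob.
have PA : Px All = 1%E.
  rewrite measure_fin_bigcup //; last exact: finite_finset.
  rewrite (_ : [set: {ffun 'I_N -> 'I_3}] = [set s | predT s]); last first.
    by apply/seteqP; split.
  rewrite fsum_fin (eq_bigr (fun s : {ffun 'I_N -> 'I_3} => (\prod_(i < N) wt q (s i))%:E)); last first.
    by move=> s _; exact: cyl_prob.
  have E : \sum_(s : {ffun 'I_N -> 'I_3}) \prod_(i < N) wt q (s i) = 1.
    rewrite -(bigA_distr_bigA (fun (i : 'I_N) (t : 'I_3) => wt q t)) /=.
    by rewrite (eq_bigr (fun=> 1)) ?prodr_const ?expr1n // => i _; exact: wt_sum.
  rewrite sumEFin; congr (_%:E); rewrite -[RHS]E; exact: eq_bigl.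
have GU : G `<=` U `|` ~` All.
  move=> w Gw; case: (pselect (All w)) => [[s _ Cs]|nA]; last by right.
  by left; exists s => //; exact: HQ Cs Gw.
apply: (le_trans (le_measure _ _ _ GU)); rewrite ?inE //.
  by apply: measurableU => //; exact: measurableC.
apply: (le_trans (measureU2 _ _ _)) => //; first exact: measurableC.
rewrite [X in (_ + X)%E](_ : _ = 0%E) ?adde0 ?PU //.
  by rewrite -[X in (X <= _)%E]/(Px U) PU.
by rewrite -[LHS]/(Px (~` All)) (probability_setC Px mA) PA subee.
Qed.


Local Open Scope ring_scope.
Local Close Scope ereal_scope.
Lemma count_int (R : realType) (X : seq int) (a b : R) : uniq X ->
  \sum_(x <- X) (if (a <= x%:~R) && (x%:~R < b) then 1 else 0 : R)
  <= Num.max 0 (b - a + 1).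
Proof.
move=> uX.
pose z0 := Num.ceil a.
pose c := Num.ceil (b - a).
have key x : (a <= x%:~R) && (x%:~R < b) -> (0 <= x - z0) && (x - z0 < c).
  case/andP => ax xb; apply/andP; split.
    by rewrite subr_ge0 /z0 ceil_le_int.
  rewrite /c ceil_gt_int rmorphB /=.
  have := ceil_ge a; rewrite -/z0 => hz.
  lra.
have [hc|hc] := leP c 0.
  rewrite big1_seq ?le_max ?lexx // => x _; case: ifP => // /key; lia.
have K1 x : (if (a <= x%:~R) && (x%:~R < b) then 1 else 0 : R)
   <= \sum_(k < `|c|%N) (if x == z0 + (k : nat)%:Z then 1 else 0).
  case: ifP => [/key /andP[h0 h1]|_]; last by apply: sumr_ge0 => k _; case: ifP.
  have hk : (`|x - z0| < `|c|)%N by lia.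
  rewrite (bigD1 (Ordinal hk)) //= -[leLHS]addr0 lerD //.
    by rewrite ifT //; apply/eqP; lia.
  by apply: sumr_ge0 => k _; case: ifP.
apply: (le_trans (ler_sum _ (fun x _ => K1 x))).
rewrite exchange_big /=.
apply: (@le_trans _ _ (\sum_(k < `|c|%N) (1 : R))).
  apply: ler_sum => k _; rewrite -big_mkcond /=.
  rewrite -(natr_sum _ _ _ (fun=> 1%N)) sum1_count.
  have := count_uniq_mem (z0 + (k : nat)%:Z) uX.
  rewrite /= => ->; rewrite (ler_nat _ _ 1); exact: leq_b1.
rewrite sumr_const card_ord natr_absz gtr0_norm // le_max; apply/orP; right.
have := ceil_itv (b - a); rewrite -/c rmorphB /= => /andP[h _]; lra.
Qed.


Local Open Scope ring_scope.
Local Close Scope ereal_scope.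
Definition mgf {R : realType} (q th : R) :=
  \sum_(t < 3) wt q t * expR (th * (stp t)%:~R).

Lemma pos_diff N (s : {ffun 'I_N -> 'I_3}) i0 i1 : (i0 <= i1)%N ->
  pos s i1 - pos s i0 = \sum_(k < N | (i0 <= k < i1)%N) stp (s k).
Proof.
move=> h; rewrite /pos (bigID (fun k : 'I_N => (k < i0)%N)) /=.
have -> : \sum_(i < N | (i < i1)%N && (i < i0)%N) stp (s i) =
          \sum_(i < N | (i < i0)%N) stp (s i).
  by apply: eq_bigl => k; apply/andP/idP => [[]//|hk]; split=> //; lia.
rewrite addrC addrK; apply: eq_bigl => k; apply/andP/andP => [] []; lia.
Qed.

Lemma mgf_prod (R : realType) (q th : R) N i0 i1 : (i0 <= i1 <= N)%N ->
  \sum_(s : {ffun 'I_N -> 'I_3})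
     (\prod_(k < N) wt q (s k)) * expR (th * (pos s i1 - pos s i0)%:~R)
  = mgf q th ^+ (i1 - i0).
Proof.
move=> /andP[h01 h1N].
pose P := fun k : 'I_N => (i0 <= k < i1)%N.
pose F := fun (k : 'I_N) (t : 'I_3) =>
  wt q t * (if P k then expR (th * (stp t)%:~R) else 1).
have E1 (s : {ffun 'I_N -> 'I_3}) :
  (\prod_(k < N) wt q (s k)) * expR (th * (pos s i1 - pos s i0)%:~R)
  = \prod_(k < N) F k (s k).
  rewrite pos_diff // rmorph_sum mulr_sumr expR_sum (big_mkcond P) -big_split /=.
  by apply: eq_bigr => k _; rewrite /F; case: ifP.
rewrite (eq_bigr _ (fun s _ => E1 s)) -(bigA_distr_bigA F) /=.
have E2 k : \sum_(t < 3) F k t = if P k then mgf q th else 1.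
  rewrite /F /mgf; case: ifP => _ //.
  by under eq_bigr do rewrite mulr1; exact: wt_sum.
rewrite (eq_bigr _ (fun k _ => E2 k)).
rewrite -(big_mkord xpredT (fun k => if (i0 <= k < i1)%N then mgf q th else 1)).
rewrite (@big_cat_nat _ _ _ i0 0 N) ?(leq_trans h01) //=.
rewrite (@big_cat_nat _ _ _ i1 i0 N) //=.
rewrite big1_seq; last by move=> k; rewrite mem_index_iota => /andP[_ hk]; rewrite ifF //; lia.
rewrite [X in _ * (_ * X)]big1_seq; last by move=> k; rewrite mem_index_iota => /andP[_ hk]; rewrite ifF //; apply/negbTE/negP => /andP[]; lia.
rewrite mul1r mulr1 -(prodr_const_nat i0 i1); apply: eq_big_seq => k.
by rewrite mem_index_iota => hk; rewrite ifT.
Qed.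


Local Open Scope ring_scope.
Local Close Scope ereal_scope.
Definition Fev {R : realType} (vbar : R) (y1 y2 : int) (l i j : nat) : set Path :=
  [set w : Path | (w (y2 - i%:Z) - y1)%:~R < - (vbar * i%:R) /\
                  vbar * j%:R <= (w (y2 + l%:Z + j%:Z) - y1 - l%:Z)%:~R].

Lemma mFev (R : realType) (vbar : R) y1 y2 l i j : measurable (Fev vbar y1 y2 l i j).
Proof.
have -> : Fev vbar y1 y2 l i j =
  [set w : Path | (w (y2 - i%:Z) - y1)%:~R < - (vbar * i%:R)] `&`
  [set w : Path | vbar * j%:R <= (w (y2 + l%:Z + j%:Z) - y1 - l%:Z)%:~R] by [].
apply: measurableI.
  exact: (mcoord (y2 - i%:Z) (fun v => (v - y1)%:~R < - (vbar * i%:R))).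
exact: (mcoord (y2 + l%:Z + j%:Z) (fun v => vbar * j%:R <= (v - y1 - l%:Z)%:~R)).
Qed.

Lemma apath_shift m x N (s : {ffun 'I_N -> 'I_3}) k :
  apath m x s k = x + apath m 0 s k.
Proof. unfold apath; lia. Qed.

Lemma max_exp (R : realType) (th u : R) : 0 < th ->
  Num.max 0 u <= expR (th * u) / th.
Proof.
move=> th0; rewrite ge_max; apply/andP; split.
  by apply: divr_ge0; [exact: expR_ge0|exact: ltW].
rewrite ler_pdivlMr //.
have := expR_ge1Dx (th * u); nra.
Qed.

Lemma wt_ge0 (R : realType) (q : R) t : 0 <= q <= 1 -> 0 <= wt q t.
Proof.
move=> /andP[q0 q1]; rewrite /wt /lazy_step.
case: ifP => // _; case: ifP => // _; lra.
Qed.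

Lemma sumx_bound (R : realType) (q vbar th : R) (P : int -> probability Path R)
  y1 y2 (l i j : nat) (X : seq int) :
  (forall x, is_lazy_walk_law q x (P x)) -> 0 <= q <= 1 -> 0 < th -> uniq X ->
  (\sum_(x <- X) P x (Fev vbar y1 y2 l i j) <=
   ((expR th / th) * expR (- (th * (1 - vbar) * l%:R)) *
     (mgf q th * expR (- (th * vbar))) ^+ (l + i + j))%:E)%E.
Proof.
move=> law hq th0 uX.
pose n0 := y2 - i%:Z. pose n1 := y2 + l%:Z + j%:Z.
pose m := if n0 <= 0 then n0 else 0.
pose M := if 0 <= n1 then n1 else 0.
have hmF : m <= n0 /\ m <= 0 /\ (m = n0 \/ m = 0) by rewrite /m; case: ifP; lia.
have hMF : n1 <= M /\ 0 <= M /\ (M = n1 \/ M = 0) by rewrite /M; case: ifP; lia.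
pose N := `|M - m|%N.
have hN : N%:Z = M - m by rewrite /N gez0_abs //; lia.
clearbody N m M.
have hn0 : n0 = y2 - i%:Z by [].
have hn1 : n1 = y2 + l%:Z + j%:Z by [].
clearbody n0 n1.
pose Qb := fun x (s : {ffun 'I_N -> 'I_3}) =>
  ((apath m x s n0 - y1)%:~R < - (vbar * i%:R)) &&
  (vbar * j%:R <= (apath m x s n1 - y1 - l%:Z)%:~R).
have step1 x : (P x (Fev vbar y1 y2 l i j) <=
   (\sum_(s | Qb x s) \prod_(k < N) wt q (s k))%:E)%E.
  apply: (@window_bound R q x (P x) m N _ (Qb x)) => //; [lia|lia|exact: mFev|].
  move=> s w Cw [F0 F1]; rewrite /Qb; apply/andP; split.
    by rewrite -Cw ?hn0 //; lia.
  by rewrite -Cw ?hn1 //; lia.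
apply: le_trans; first exact: (@lee_sum _ _ _ _ X xpredT (fun x _ => step1 x)).
rewrite sumEFin lee_fin.
pose i0 := `|n0 - m|%N. pose i1 := `|n1 - m|%N.
have e0 : i0%:Z = n0 - m by rewrite /i0 gez0_abs //; lia.
have e1 : i1%:Z = n1 - m by rewrite /i1 gez0_abs //; lia.
have hi01 : (i0 <= i1 <= N)%N by lia.
have hd : (i1 - i0 = l + i + j)%N by lia.
pose c := 1 - l%:R - vbar * (i + j)%:R.
have wt0 (s : {ffun 'I_N -> 'I_3}) : 0 <= \prod_(k < N) wt q (s k).
  by apply: prodr_ge0 => k _; exact: wt_ge0.
have key (s : {ffun 'I_N -> 'I_3}) :
  \sum_(x <- X) (if Qb x s then \prod_(k < N) wt q (s k) else 0)
  <= \prod_(k < N) wt q (s k) * (expR (th * ((pos s i1 - pos s i0)%:~R + c)) / th).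
  have -> : \sum_(x <- X) (if Qb x s then \prod_(k < N) wt q (s k) else 0) =
     \prod_(k < N) wt q (s k) * \sum_(x <- X) (if Qb x s then 1 else 0).
    by rewrite mulr_sumr; apply: eq_bigr => x _; case: ifP; rewrite ?mulr1 ?mulr0.
  apply: ler_wpM2l; first exact: wt0.
  pose al : R := y1%:~R + l%:R + vbar * j%:R - (apath m 0 s n1)%:~R.
  pose be : R := y1%:~R - vbar * i%:R - (apath m 0 s n0)%:~R.
  have EQ x : Qb x s = (al <= x%:~R) && (x%:~R < be).
    rewrite /Qb /al /be !(apath_shift m x) !rmorphB !rmorphD /= ?mulrz_nat.
    by apply/andP/andP => [] [h1 h2]; split; lra.
  under eq_bigr do rewrite EQ.
  apply: le_trans (count_int R X al be uX) _.
  apply: le_trans (@max_exp R th _ th0) _.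
  have hD : (apath m 0 s n1)%:~R - (apath m 0 s n0)%:~R = (pos s i1 - pos s i0)%:~R :> R.
    by rewrite -rmorphB; congr (_ %:~R); rewrite /apath /i0 /i1; ring.
  rewrite le_eqVlt; apply/orP; left; apply/eqP; congr (expR (th * _) / th).
  rewrite /c /al /be natrD; lra.
under eq_bigr do rewrite big_mkcond /=.
rewrite exchange_big /=.
apply: le_trans (ler_sum _ (fun s _ => key s)) _.
have -> : \sum_(s : {ffun 'I_N -> 'I_3})
   \prod_(k < N) wt q (s k) * (expR (th * ((pos s i1 - pos s i0)%:~R + c)) / th)
  = expR (th * c) / th * \sum_(s : {ffun 'I_N -> 'I_3})
   (\prod_(k < N) wt q (s k)) * expR (th * (pos s i1 - pos s i0)%:~R).
  rewrite mulr_sumr; apply: eq_bigr => s _.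
  rewrite mulrDr expRD; ring.
rewrite mgf_prod // hd exprMn -expRM_natl.
have E : expR (th * c) = expR th * expR (- (th * (1 - vbar) * l%:R)) *
    expR ((l + i + j)%N%:R * - (th * vbar)).
  rewrite -!expRD; congr expR; rewrite /c !natrD; ring.
rewrite E le_eqVlt; apply/orP; left; apply/eqP; ring.
Qed.


Local Open Scope ring_scope.
Local Close Scope ereal_scope.
Local Open Scope ereal_scope.

Lemma geo_le (R : realType) (a r : R) : (0 <= a)%R -> (0 < r)%R -> (r < 1)%R ->
  \sum_(0 <= j <oo) (a * r ^+ j)%:E <= (a / (1 - r))%:E.
Proof.
move=> a0 r0 r1; apply: lime_le.
  by apply: is_cvg_nneseries => n _ _; rewrite lee_fin mulr_ge0 // exprn_ge0 // ltW.
apply: nearW => n; rewrite sumEFin lee_fin.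
have hr : (`|r| < 1)%R by rewrite ger0_norm // ltW.
have := @geometric_le_lim R n a r a0 r0 hr.
by rewrite /series /=.
Qed.

Lemma geo2_le (R : realType) (K r : R) (l : nat) : (0 <= K)%R -> (0 < r)%R -> (r < 1)%R ->
  \sum_(0 <= i <oo) \sum_(0 <= j <oo) (K * r ^+ (l + i + j))%:E
    <= (K * r ^+ l / (1 - r) / (1 - r))%:E.
Proof.
move=> K0 r0 r1.
have inner i : \sum_(0 <= j <oo) (K * r ^+ (l + i + j))%:E
    <= ((K * r ^+ l / (1 - r)) * r ^+ i)%:E.
  rewrite (@eq_eseriesr _ _ (fun j => ((K * r ^+ (l + i)) * r ^+ j)%:E)); last first.
    by move=> j _; rewrite exprD mulrA.
  apply: le_trans; first by apply: geo_le => //; rewrite mulr_ge0 // exprn_ge0 // ltW.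
  rewrite lee_fin exprD le_eqVlt; apply/orP; left; apply/eqP; ring.
apply: (@le_trans _ _ (\sum_(0 <= i <oo) ((K * r ^+ l / (1 - r)) * r ^+ i)%:E)).
  apply: lee_nneseries => [i _ _|i _]; last exact: inner.
  by apply: nneseries_ge0 => j _ _; rewrite lee_fin mulr_ge0 // exprn_ge0 // ltW.
apply: le_trans.
  by apply: geo_le => //; apply: divr_ge0; [apply: mulr_ge0 => //; apply: exprn_ge0; exact: ltW| lra].
by [].
Qed.

Local Close Scope ereal_scope.
Lemma natrZ (R : realType) (k : nat) : (k%:R : R) = (k%:Z)%:~R.
Proof. by []. Qed.

Lemma cover (R : realType) (vbar : R) (y : int * int) (l : nat) :
  Wcross vbar y `&` Wcross vbar (y.1 + l%:Z, y.2 + l%:Z) `<=`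
  \bigcup_(i : nat) \bigcup_(j : nat) Fev vbar y.1 y.2 l i j.
Proof.
move=> w [[_ [_ [p [[n _ <-] /= [h1 [h2 h3]]]]]] [_ [[p' [[n' _ <-] /= [g1 [g2 g3]]]] _]]].
rewrite /= in h1 h2 h3 g1 g2 g3.
exists (absz (y.2 - n)%R) => //; exists (absz (n' - (y.2 + l%:Z))%R) => //.
have en : y.2 - (absz (y.2 - n)%R)%:Z = n by rewrite gez0_abs; lia.
have en' : y.2 + l%:Z + (absz (n' - (y.2 + l%:Z))%R)%:Z = n' by rewrite gez0_abs; lia.
split; rewrite ?en ?en' natrZ gez0_abs; try lia.
  by move: h3; rewrite !rmorphB /=; lra.
by move: g3; rewrite !rmorphB !rmorphD /=; lra.
Qed.

Local Open Scope ereal_scope.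

Lemma sub_bound (R : realType) (vbar : R) (Px : probability Path R) y (l : nat) :
  Px (Wcross vbar y `&` Wcross vbar (y.1 + l%:Z, y.2 + l%:Z)%R) <=
  \sum_(0 <= i <oo) \sum_(0 <= j <oo) Px (Fev vbar y.1 y.2 l i j).
Proof.
have mA : measurable (Wcross vbar y `&` Wcross vbar (y.1 + l%:Z, y.2 + l%:Z)%R).
  by apply: measurableI; exact: mWcross.
have mFi i : measurable (\bigcup_(j : nat) Fev vbar y.1 y.2 l i j).
  by apply: bigcupT_measurable => j; exact: mFev.
have h := measure_sigma_subadditive Px mFi mA (@cover R vbar y l).

apply: le_trans.
  exact: h.
apply: lee_nneseries => [i _ _|i _]; first exact: measure_ge0.
apply: (measure_sigma_subadditive Px) => //.
by move=> j; exact: mFev.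
Qed.

Lemma esum_bound (R : realType) (f : int -> \bar R) (B : \bar R) :
  (forall X : seq int, uniq X -> \sum_(x <- X) f x <= B) ->
  \esum_(x in [set: int]) f x <= B.
Proof.
move=> H; apply: ge_ereal_sup => z [S [finS _] <-].
by rewrite fsbig_finite //=; apply: H; exact: finmap.fset_uniq.
Qed.


Local Open Scope ring_scope.
Local Close Scope ereal_scope.
Lemma nu_bound (R : realType) (q vbar th : R) (P : int -> probability Path R)
  (y : int * int) (l : nat) :
  (forall x, is_lazy_walk_law q x (P x)) -> 0 <= q <= 1 -> 0 < th ->
  0 < mgf q th * expR (- (th * vbar)) -> mgf q th * expR (- (th * vbar)) < 1 ->
  (\esum_(x in [set: int]) P x (Wcross vbar y `&` Wcross vbar ((y.1 + l%:Z)%R, (y.2 + l%:Z)%R))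
   <= ((expR th / th * expR (- (th * (1 - vbar) * l%:R))) *
        (mgf q th * expR (- (th * vbar))) ^+ l /
        (1 - mgf q th * expR (- (th * vbar))) /
        (1 - mgf q th * expR (- (th * vbar))))%:E)%E.
Proof.
move=> law hq th0 r0 r1.
set r := mgf q th * expR (- (th * vbar)).
set K := expR th / th * expR (- (th * (1 - vbar) * l%:R)).
have K0 : 0 <= K by apply: mulr_ge0; [apply: divr_ge0; [exact: expR_ge0|exact: ltW]|exact: expR_ge0].
apply: esum_bound => X uX.
apply: le_trans.
  exact: (@lee_sum _ _ _ _ X xpredT (fun x _ => sub_bound _ vbar (P x) y l)).
rewrite -(@nneseries_sum int X xpredT R (fun x i =>
   (\sum_(0 <= j <oo) P x (Fev vbar y.1 y.2 l i j))%E) 0%N); last first.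
  by move=> x i _; apply: nneseries_ge0 => j _ _; exact: measure_ge0.
apply: (@le_trans _ _ (\sum_(0 <= i <oo) \sum_(0 <= j <oo) (K * r ^+ (l + i + j))%:E)%E); last first.
  exact: geo2_le.
apply: lee_nneseries => [i _ _|i _].
  by apply: sume_ge0 => x _; apply: nneseries_ge0 => j _ _; exact: measure_ge0.
rewrite -(@nneseries_sum int X xpredT R (fun x j => P x (Fev vbar y.1 y.2 l i j)) 0%N); last first.
  by move=> x j _; exact: measure_ge0.
apply: lee_nneseries => [j _ _|j _].
  by apply: sume_ge0 => x _; exact: measure_ge0.
by apply: sumx_bound.
Qed.


Local Open Scope ring_scope.
Local Close Scope ereal_scope.
Lemma mgfE (R : realType) (q th : R) :
  mgf q th = (1 - q) / 2 * expR (- th) + q + (1 - q) / 2 * expR th.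
Proof.
rewrite /mgf !big_ord_recr big_ord0 /= /wt /stp /lazy_step /=.
rewrite add0r !mulr1 mulr0 expR0 mulrN1 mulr1; ring.
Qed.

Lemma r_bounds (R : realType) (q vbar : R) : 0 < q < 1 -> 0 < vbar < 1 ->
  0 < mgf q (vbar / 2) * expR (- (vbar / 2 * vbar)) /\
  mgf q (vbar / 2) * expR (- (vbar / 2 * vbar)) < 1.
Proof.
move=> /andP[q0 q1] /andP[v0 v1].
set th := vbar / 2.
have th0 : 0 < th by rewrite /th; lra.
have th1 : th <= 1 / 2 by rewrite /th; lra.
set e := expR th. set e' := expR (- th).
have ee : e * e' = 1 by rewrite /e /e' -expRD subrr expR0.
have e0 : 0 < e := expR_gt0 _.
have e'0 : 0 < e' := expR_gt0 _.
have he' : 1 - th <= e' by have := expR_ge1Dx (- th); rewrite /e'; lra.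
have he : 1 + th <= e by have := expR_ge1Dx th.
have e2 : e <= 2.
  have : e * (1 - th) <= e * e' by apply: ler_wpM2l; [exact: ltW|].
  rewrite ee; nra.
have E1 : e - 1 <= th * e.
  have : e * (1 - e') <= e * th by apply: ler_wpM2l; [exact: ltW|lra].
  rewrite mulrBr mulr1 ee; lra.
have E2 : e + e' - 2 <= th ^+ 2 * e.
  have -> : e + e' - 2 = e' * (e - 1) ^+ 2.
    rewrite !expr2; transitivity (e * e' * e - 2 * (e * e') + e'); first by rewrite ee; ring.
    ring.
  have h1 : (e - 1) ^+ 2 <= (th * e) ^+ 2 by rewrite !expr2; nra.
  have : e' * (e - 1) ^+ 2 <= e' * (th * e) ^+ 2 by apply: ler_wpM2l => //; exact: ltW.
  have -> : e' * (th * e) ^+ 2 = th ^+ 2 * e * (e * e') by ring.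
  by rewrite ee mulr1.
have mE : mgf q th = q + (1 - q) / 2 * (e + e').
  by rewrite mgfE -/e -/e'; ring.
have hv : 1 + th * vbar <= expR (th * vbar) := expR_ge1Dx _.
have m0 : 0 < mgf q th.
  rewrite mE; have : 0 <= (1 - q) / 2 * (e + e') by apply: mulr_ge0; lra.
  lra.
split; first by apply: mulr_gt0 => //; exact: expR_gt0.
rewrite expRN ltr_pdivrMr ?expR_gt0 // mul1r.
apply: (lt_le_trans _ hv); rewrite mE.
have A1 : (1 - q) / 2 * (e + e' - 2) <= (1 - q) * th ^+ 2.
  have : (1 - q) / 2 * (e + e' - 2) <= (1 - q) / 2 * (th ^+ 2 * e).
    by apply: ler_wpM2l => //; lra.
  have : th ^+ 2 * e <= th ^+ 2 * 2 by apply: ler_wpM2l => //; exact: sqr_ge0.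
  have : 0 <= (1 - q) / 2 by lra.
  nra.
have hvb : vbar = 2 * th by rewrite /th; field.
have A2 : (1 - q) * th ^+ 2 < th * vbar.
  rewrite hvb expr2; nra.
lra.
Qed.


Local Open Scope ring_scope.
Local Close Scope ereal_scope.
Theorem lemma4p3 (R : realType) (q rho vbar : R) :
  0 < q -> q < 1 -> 0 < rho -> 0 < vbar -> vbar < 1 ->
  exists c1 c2 : R, 0 < c1 /\ 0 < c2 /\
    forall (P : int -> probability Path R),
      (forall x, is_lazy_walk_law q x (P x)) ->
    forall (d : measure_display) (Omega : measurableType d)
           (PP : probability Omega R)
           (omega : Omega -> {measure set Path -> \bar R}),
      is_PPP PP (intensity rho P) omega ->
    forall (y : int * int) (l : nat),
      (PP (h_gt vbar omega y l) <= (c1 * expR (- c2 * l%:R))%:E)%E.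
Proof.
move=> q0 q1 rho0 v0 v1.
have [r0 r1] := @r_bounds R q vbar (andb_true_intro (conj q0 q1)) (andb_true_intro (conj v0 v1)).
set th := vbar / 2.
set r := mgf q th * expR (- (th * vbar)).
have th0 : 0 < th by rewrite /th; lra.
have r0' : 0 < r := r0.
have r1' : r < 1 := r1.
exists (rho * (expR th / th) / (1 - r) / (1 - r)), (th * (1 - vbar)).
split.
  apply: divr_gt0; [apply: divr_gt0; [apply: mulr_gt0 => //; apply: divr_gt0 => //; exact: expR_gt0|]|]; lra.
split; first by apply: mulr_gt0 => //; lra.
move=> P law d Omega PP omega [mOm [Pois [Inf Indep]]] y l.
set A := Wcross vbar y `&` Wcross vbar (y.1 + l%:Z, y.2 + l%:Z).
have mA : measurable A by apply: measurableI; exact: mWcross.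
set B := (expR th / th * expR (- (th * (1 - vbar) * l%:R))) * r ^+ l / (1 - r) / (1 - r).
have hB := @nu_bound R q vbar th P y l law (andb_true_intro (conj (ltW q0) (ltW q1))) th0 r0 r1.
have nu0 : (0 <= intensity rho P A)%E.
  rewrite /intensity; apply: mule_ge0; first by rewrite lee_fin ltW.
  by apply: esum_ge0 => x _; exact: measure_ge0.
have nuA : (intensity rho P A <= (rho * B)%:E)%E.
  rewrite /intensity EFinM; apply: lee_wpmul2l; first by rewrite lee_fin ltW.
  exact: hB.
have finA : intensity rho P A \is a fin_num.
  by rewrite ge0_fin_numE //; apply: le_lt_trans nuA _; exact: ltey.
set m := fine (intensity rho P A).
have em : intensity rho P A = m%:E by rewrite /m fineK.
have m_le : m <= rho * B by rewrite -lee_fin -em.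
have m0 : 0 <= m by rewrite -lee_fin -em.
have P0 := Pois A m mA em 0%N.
rewrite expr0 mulr1 fact0 divr1 in P0.
pose Z (X : set Path) := [set o : Omega | omega o X = (0%:R)%:E].
have mZ X : measurable X -> measurable (Z X).
  move=> mX; have := mOm X mX measurableT [set (0%:R)%:E] (emeasurable_set1 _).
  by rewrite setTI.
have sub : h_gt vbar omega y l `<=` ~` Z A.
  by move=> o /(_ l (leqnn l)) /eqP ne E; apply: ne; rewrite -/A E.
have mh : measurable (h_gt vbar omega y l).
  have -> : h_gt vbar omega y l = \bigcap_(l' in [set l' | (l' <= l)%N])
      ~` Z (Wcross vbar y `&` Wcross vbar (y.1 + l'%:Z, y.2 + l'%:Z)).
    apply/seteqP; split => [z H k hk|z H k hk].
      by move=> E; move: (H k hk); rewrite /Z /= in E *; rewrite E eqxx.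
    by apply/eqP => E; apply: (H k hk); rewrite /Z /= E.
  apply: bigcap_measurable; first by exists 0%N.
  move=> l' _; apply: measurableC; apply: mZ; apply: measurableI; exact: mWcross.
have mZA : measurable (~` Z A) by apply: measurableC; exact: mZ.
apply: (@le_trans _ _ (PP (~` Z A))).
  by apply: (le_measure PP) => //; rewrite inE.
rewrite (probability_setC PP (mZ _ mA)).
have P0' : PP (Z A) = (expR (- m))%:E := P0.
rewrite P0' -EFinB lee_fin.
have h1 : 1 - expR (- m) <= m by have := expR_ge1Dx (- m); lra.
apply: (le_trans h1); apply: (le_trans m_le).
have -> : rho * B = (rho * (expR th / th) / (1 - r) / (1 - r) *
    expR (- (th * (1 - vbar)) * l%:R)) * r ^+ l.
  by rewrite /B mulNr; ring.
apply: ler_piMr.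
  apply: mulr_ge0; last exact: expR_ge0.
  apply: divr_ge0; [apply: divr_ge0; [apply: mulr_ge0; [lra|apply: divr_ge0; [exact: expR_ge0|lra]]|]|]; lra.
by apply: exprn_ile1; lra.
Qed.
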